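(* For every instance $(N,C,\mathbf{A},k)$ with $|N|=n$ that has at least one cohesive group, the committee output by GreedyAV has JR degree at least $\frac{n}{k^2}$.
   Context: An instance consists of voters $N=\{1,\dots,n\}$, candidates $C$, approval ballots $A_i\subseteq C$ for $i\in N$, and a committee size $k$ with $1\le k\le|C|$. A set $N'\subseteq N$ is a cohesive group if $|N'|\ge n/k$ and $|\bigcap_{i\in N'}A_i|\ge 1$. A size-$k$ committee $W\subseteq C$ achieves JR degree $c$ if every cohesive group contains at least $c$ voters $i$ with $|A_i\cap W|\ge1$. GreedyAV: start with $W=\emptyset$ and the set $R=N$ of remaining voters; repeat $k$ times: choose a candidate $c\notin W$ approved by the maximum number of voters in $R$ (ties broken arbitrarily), add $c$ to $W$, and remove from $R$ all voters approving $c$; output $W$. *)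

(* Defs.v *)
From mathcomp Require Import all_boot.
Set Implicit Arguments. Unset Strict Implicit. Unset Printing Implicit Defensive.

Section Approval.
Variables (n : nat) (C : finType) (A : 'I_n -> {set C}).

Definition cohesive (k : nat) (G : {set 'I_n}) : Prop :=
  n <= #|G| * k /\ exists c : C, forall i, i \in G -> c \in A i.

Definition achieves_JR_degree (k : nat) (W : {set C}) (c : nat) : Prop :=
  forall G : {set 'I_n}, cohesive k G ->
    c <= #|[set i in G | A i :&: W != set0]|.

Definition remaining (S : seq C) : {set 'I_n} :=
  [set i | all (fun c => c \notin A i) S].

Definition score (S : seq C) (c : C) : nat :=
  #|[set i in remaining S | c \in A i]|.

(* s is a possible execution of GreedyAV (for some tie-breaking):
   s lists the k chosen candidates in order of selection, each one new and
   of maximum score among the remaining voters over all unchosen candidates. *)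
Definition greedyAV_run (k : nat) (s : seq C) : Prop :=
  [/\ uniq s, size s = k &
      forall (j : nat) (c : C), j < k -> c \notin take j s ->
        score (take j s) c <= score (take j s) (nth c s j)].

End Approval.

(* Main.v *)
Require Import Defs.
From mathcomp Require Import all_boot.
From mathcomp Require Import zify.

Lemma rem_nil (n : nat) (C : finType) (A : 'I_n -> {set C}) :
  remaining A [::] = setT.
Proof. by apply/setP => i; rewrite !inE. Qed.

Lemma rem_rcons (n : nat) (C : finType) (A : 'I_n -> {set C}) S c :
  remaining A (rcons S c) = remaining A S :\: [set i | c \in A i].
Proof. by apply/setP => i; rewrite !inE all_rcons andbC. Qed.

Lemma card_step (n : nat) (C : finType) (A : 'I_n -> {set C}) S c :
  #|remaining A (rcons S c)| + score A S c = #|remaining A S|.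
Proof.
rewrite -(cardsID [set i | c \in A i] (remaining A S)) addnC rem_rcons /score.
have -> : [set i in remaining A S | c \in A i] = remaining A S :&: [set i | c \in A i].
  by apply/setP => i; rewrite !inE.
by [].
Qed.

Theorem proposition2 (n : nat) (C : finType) (A : 'I_n -> {set C}) (k : nat) :
  1 <= k <= #|C| ->
  (exists G : {set 'I_n}, cohesive A k G) ->
  forall s : seq C, greedyAV_run A k s ->
  exists c : nat, n <= c * k ^ 2 /\ achieves_JR_degree A k [set x in s] c.
Proof.
move=> /andP[k1 _] _ s [us sz hg].
pose P := fun c => n <= c * k ^ 2.
have exP: exists c, P c by exists n; rewrite /P; nia.
exists (ex_minn exP); case: ex_minnP => c0 Pc0 minc; split => //.
move=> G [hGk [cs hcs]]; apply: minc; rewrite /P.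
case: (boolP (cs \in s)) => hin.
  have ->: [set i in G | A i :&: [set x in s] != set0] = G.
    apply/setP => i; rewrite !inE; case: (boolP (i \in G)) => //= iG.
    by apply/set0Pn; exists cs; rewrite !inE hcs.
  nia.
pose R j := remaining A (take j s).
pose y j := #|G :&: R j|.
have cov: [set i in G | A i :&: [set x in s] != set0] = G :\: R k.
  apply/setP => i; rewrite !inE /R -sz take_size.
  case: (i \in G); rewrite ?andbT ?andbF //=.
  apply/idP/idP.
    move=> /set0Pn[c]; rewrite !inE => /andP[h1 h2].
    by apply/allPn; exists c => //=; rewrite h1.
  move=> /allPn[c h1 /=]; rewrite negbK => h2.
  by apply/set0Pn; exists c; rewrite !inE h1 h2.
have hx: #|G :\: R k| + y k = #|G| by rewrite addnC cardsID.
have step j : j < k -> #|R j.+1| + score A (take j s) (nth cs s j) = #|R j|.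
  by move=> jk; rewrite /R (take_nth cs) ?sz // card_step.
have ge j : j < k -> y j <= score A (take j s) (nth cs s j).
  move=> jk; apply: leq_trans (hg j cs jk _).
    apply: subset_leq_card; apply/subsetP => i; rewrite !inE => /andP[h1 h2].
    by rewrite h2 hcs.
  by apply: contra hin; apply: mem_take.
have mono j : j < k -> y j.+1 <= y j.
  move=> jk; apply: subset_leq_card; apply: setIS.
  by rewrite /R (take_nth cs) ?sz // rem_rcons subsetDl.
have inv m : m < k -> #|R m.+1| + #|G| + m * y m.+1 <= n.
  elim: m => [|m IH] mk.
    have := step 0 mk; have := ge 0 mk.
    rewrite /y /R take0 rem_nil setIT cardsT card_ord; lia.
  have := IH (ltnW mk); have := step _ mk; have := ge _ mk; have := mono _ mk.
  move=> h1 h2 h3 h4.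
  have : m.+1 * y m.+2 <= m.+1 * y m.+1 by rewrite leq_mul2l h1 orbT.
  nia.
have := inv k.-1; rewrite prednK // => /(_ (leqnn _)) hk.
have ykR : y k <= #|R k| by apply: subset_leq_card; apply: subsetIr.
rewrite cov.
have hxk : #|G :\: R k| = #|G| - y k by lia.
rewrite hxk.
have e1 : #|G| + k * y k <= n by nia.
have e2 : y k <= #|G| by lia.
nia.
Qed.
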